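(* Let $\vec X=(X_1,\ldots,X_t)\in(\mathcal{H}_m^{\otimes n})^t$ satisfy $\sum_{i=1}^tX_i=\mathrm{id}$, and let $\mathcal{R}(\vec X)=\arg\min\{\|\vec X-\vec P\|'^2_2:\vec P\text{ is a sub-POVM}\}$. Then $$\|\mathcal{R}(\vec X)-\vec X\|'^2_2\le\frac{3(t+1)}{m^n}\sum_{i=1}^t\mathrm{Tr}\,\zeta(X_i)+6\Big(\frac{t}{m^n}\sum_{i=1}^t\mathrm{Tr}\,\zeta(X_i)\Big)^{1/2}.$$
   Context: $\mathcal{H}_m^{\otimes n}$ denotes Hermitian operators on $(\mathbb{C}^m)^{\otimes n}$. A sub-POVM is a tuple $(P_1,\ldots,P_t)$ of positive semidefinite operators with $\sum_iP_i\le\mathrm{id}$. For tuples, $\|\vec Y\|'^2_2=\sum_{i=1}^t\frac1{m^n}\mathrm{Tr}Y_i^\dagger Y_i$. $\zeta:\mathbb{R}\to\mathbb{R}$ is $\zeta(x)=x^2$ for $x\le0$ and $0$ otherwise, applied to Hermitian matrices through the spectral decomposition. *)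

(* Defs.v *)
From HB Require Import structures.
From mathcomp Require Import all_boot all_order all_algebra.
From mathcomp Require Import complex.
From mathcomp Require Import reals.
Set Implicit Arguments. Unset Strict Implicit. Unset Printing Implicit Defensive.
Import Order.TTheory GRing.Theory Num.Theory.
Local Open Scope ring_scope.
Local Open Scope sesquilinear_scope.
Local Open Scope complex_scope.

Section Defs.
Variable R : realType.
Local Notation C := (R[i]).

Definition zeta (x : R) : R := if x <= 0 then x ^+ 2 else 0.

Definition zeta_mx (N : nat) (A : 'M[C]_N) : 'M[C]_N :=
  invmx (spectralmx A)
  *m diag_mx (\row_j ((zeta (complex.Re (spectral_diag A 0 j)))%:C))
  *m spectralmx A.

Definition psdmx (N : nat) (A : 'M[C]_N) : Prop :=
  A \is hermsymmx /\ forall v : 'rV[C]_N, 0 <= (v *m A *m v ^t*) 0 0.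

Definition subPOVM (N t : nat) (P : 'I_t -> 'M[C]_N) : Prop :=
  (forall i, psdmx (P i)) /\ psdmx (1%:M - \sum_(i < t) P i).

Definition normsq' (N t : nat) (Y : 'I_t -> 'M[C]_N) : R :=
  \sum_(i < t) complex.Re (\tr ((Y i) ^t* *m Y i)) / N%:R.

Definition tup_sub (N t : nat) (Y Z : 'I_t -> 'M[C]_N) : 'I_t -> 'M[C]_N :=
  fun i => Y i - Z i.

Definition is_argmin_subPOVM (N t : nat) (X P : 'I_t -> 'M[C]_N) : Prop :=
  subPOVM P /\
  forall Q : 'I_t -> 'M[C]_N, subPOVM Q ->
    normsq' (tup_sub X P) <= normsq' (tup_sub X Q).

End Defs.

(* Main.v *)
Require Import Defs.
From HB Require Import structures.
From mathcomp Require Import all_boot all_order all_algebra.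
From mathcomp Require Import complex.
From mathcomp Require Import reals.
From mathcomp Require Import ring lra.
Import Order.TTheory GRing.Theory Num.Theory.
Local Open Scope ring_scope.
Local Open Scope sesquilinear_scope.

Set Implicit Arguments. Unset Strict Implicit. Unset Printing Implicit Defensive.

Section Gen.
Variable C : numClosedFieldType.

Lemma trmxC_mul m n p (A : 'M[C]_(m,n)) (B : 'M[C]_(n,p)) :
  (A *m B)^t* = B^t* *m A^t*.
Proof. by rewrite trmx_mul map_mxM. Qed.

Lemma trmxC_add m n (A B : 'M[C]_(m,n)) : (A + B)^t* = A^t* + B^t*.
Proof. by rewrite linearD /= map_mxD. Qed.

Lemma trmxC_opp m n (A : 'M[C]_(m,n)) : (- A)^t* = - A^t*.
Proof. by rewrite linearN /= map_mxN. Qed.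

Lemma trmxC1 n : (1%:M : 'M[C]_n)^t* = 1%:M.
Proof. by rewrite trmx1 map_mx1. Qed.

Lemma unitary_l n (P : 'M[C]_n) : P \is unitarymx -> P^t* *m P = 1%:M.
Proof. by move=> Pu; have := mulmxKtV 1%:M Pu erefl; rewrite mul1mx. Qed.

Lemma unitary_r n (P : 'M[C]_n) : P \is unitarymx -> P *m P^t* = 1%:M.
Proof. by move/unitarymxP. Qed.

Lemma hermP n (A : 'M[C]_n) : reflect (A = A^t*) (A \is hermsymmx).
Proof. by rewrite is_hermitianmxE expr0 scale1r; apply: eqP. Qed.

Definition qf n (A : 'M[C]_n) (v : 'rV[C]_n) := (v *m A *m v^t*) 0 0.
Definition psdf n (A : 'M[C]_n) := forall v, 0 <= qf A v.

Lemma psdf_congr m n (B : 'M[C]_(m,n)) (A : 'M[C]_n) :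
  psdf A -> psdf (B *m A *m B^t*).
Proof.
move=> HA v; have := HA (v *m B).
by rewrite /qf trmxC_mul !mulmxA.
Qed.

Lemma herm_congr m n (B : 'M[C]_(m,n)) (A : 'M[C]_n) :
  A \is hermsymmx -> B *m A *m B^t* \is hermsymmx.
Proof.
move=> /hermP HA; apply/hermP.
by rewrite !trmxC_mul trmxCK -HA mulmxA.
Qed.

Lemma qfD n (A B : 'M[C]_n) v : qf (A + B) v = qf A v + qf B v.
Proof. by rewrite /qf mulmxDr mulmxDl mxE. Qed.

Lemma qf0 n (v : 'rV[C]_n) : qf 0 v = 0.
Proof. by rewrite /qf mulmx0 mul0mx mxE. Qed.

Lemma psdf0 n : psdf (0 : 'M[C]_n).
Proof. by move=> v; rewrite qf0. Qed.

Lemma psdfD n (A B : 'M[C]_n) : psdf A -> psdf B -> psdf (A + B).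
Proof. by move=> HA HB v; rewrite qfD addr_ge0. Qed.

Lemma psdf_sum n (I : finType) (P : pred I) (A : I -> 'M[C]_n) :
  (forall i, P i -> psdf (A i)) -> psdf (\sum_(i | P i) A i).
Proof.
move=> H; apply: (big_ind (fun M => psdf M)); [exact: psdf0|exact: psdfD|exact: H].
Qed.

Lemma herm0 n : (0 : 'M[C]_n) \is hermsymmx.
Proof. by apply/hermP; rewrite trmx0 map_mx0. Qed.

Lemma hermD n (A B : 'M[C]_n) : A \is hermsymmx -> B \is hermsymmx -> A + B \is hermsymmx.
Proof. by move=> /hermP HA /hermP HB; apply/hermP; rewrite trmxC_add -HA -HB. Qed.

Lemma herm_sum n (I : finType) (P : pred I) (A : I -> 'M[C]_n) :
  (forall i, P i -> A i \is hermsymmx) -> \sum_(i | P i) A i \is hermsymmx.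
Proof.
move=> H; apply: (big_ind (fun M => M \is hermsymmx)); [exact: herm0|exact: hermD|exact: H].
Qed.

Lemma qf_diag n (d : 'rV[C]_n) v :
  qf (diag_mx d) v = \sum_k d 0 k * (v 0 k * (v 0 k)^*).
Proof.
rewrite /qf mul_mx_diag mxE; apply: eq_bigr => k _.
by rewrite !mxE mulrCA mulrA.
Qed.

Lemma psdf_diag n (d : 'rV[C]_n) : (forall k, 0 <= d 0 k) -> psdf (diag_mx d).
Proof.
move=> H v; rewrite qf_diag; apply: sumr_ge0 => k _.
by apply: mulr_ge0 => //; apply: mul_conjC_ge0.
Qed.

Definition Fm n (P : 'M[C]_n) (d : 'rV[C]_n) := P^t* *m diag_mx d *m P.

Lemma Fm_congr n (P : 'M[C]_n) (d : 'rV[C]_n) : Fm P d = P^t* *m diag_mx d *m (P^t*)^t*.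
Proof. by rewrite trmxCK. Qed.

Lemma psdf_Fm n (P : 'M[C]_n) (d : 'rV[C]_n) : (forall k, 0 <= d 0 k) -> psdf (Fm P d).
Proof. by move=> H; rewrite Fm_congr; apply: psdf_congr; apply: psdf_diag. Qed.

Lemma qf_delta n (B : 'M[C]_n) j : qf B (delta_mx 0 j) = B j j.
Proof.
rewrite /qf -rowE mxE (bigD1 j) //= big1 ?addr0.
  by rewrite !mxE !eqxx /= conjC1 mulr1.
by move=> k /negbTE kj; rewrite !mxE kj andbF conjC0 mulr0.
Qed.

Lemma Fm_nonneg n (P : 'M[C]_n) (d : 'rV[C]_n) k : P \is unitarymx -> psdf (Fm P d) -> 0 <= d 0 k.
Proof.
move=> Pu H; have := H (delta_mx 0 k *m P).
rewrite /qf /Fm trmxC_mul !mulmxA mulmxtVK // -(mulmxA _ P) unitary_r // mulmx1.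
rewrite -/(qf (diag_mx d) (delta_mx 0 k)) qf_delta mxE eqxx mulr1n //.
Qed.


Lemma Fm_add n (P : 'M[C]_n) (d1 d2 : 'rV[C]_n) : Fm P d1 + Fm P d2 = Fm P (d1 + d2).
Proof. by rewrite /Fm raddfD /= mulmxDr mulmxDl. Qed.

Lemma Fm_sub n (P : 'M[C]_n) (d1 d2 : 'rV[C]_n) : Fm P d1 - Fm P d2 = Fm P (d1 - d2).
Proof. by rewrite /Fm raddfB /= mulmxBr mulmxBl. Qed.

Lemma Fm_mul n (P : 'M[C]_n) (d1 d2 : 'rV[C]_n) : P \is unitarymx ->
  Fm P d1 *m Fm P d2 = Fm P (\row_j (d1 0 j * d2 0 j)).
Proof.
move=> Pu; rewrite /Fm !mulmxA mulmxtVK // -(mulmxA _ (diag_mx d1)) mulmx_diag.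
by [].
Qed.

Lemma Fm_one n (P : 'M[C]_n) : P \is unitarymx -> Fm P (const_mx 1) = 1%:M.
Proof. by move=> Pu; rewrite /Fm diag_const_mx mulmx1 unitary_l. Qed.

Lemma Fm_conj n (P : 'M[C]_n) (d : 'rV[C]_n) : P \is unitarymx ->
  P *m Fm P d *m P^t* = diag_mx d.
Proof.
move=> Pu; rewrite /Fm !mulmxA unitary_r // mul1mx -mulmxA unitary_r //.
by rewrite mulmx1.
Qed.

Lemma spec_eq n (A : 'M[C]_n) : A \is hermsymmx ->
  A = Fm (spectralmx A) (spectral_diag A).
Proof.
move=> /hermitian_normalmx /orthomx_spectralP {1}->.
by rewrite invmx_unitary // spectral_unitarymx.
Qed.

Lemma diag_trC n (d : 'rV[C]_n) : (diag_mx d)^t* = diag_mx (map_mx Num.conj_op d).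
Proof. by rewrite tr_diag_mx map_diag_mx. Qed.

Lemma herm_Fm n (P : 'M[C]_n) (d : 'rV[C]_n) :
  (forall k, (d 0 k)^* = d 0 k) -> Fm P d \is hermsymmx.
Proof.
move=> H; rewrite Fm_congr; apply: herm_congr; apply/hermP; rewrite diag_trC.
congr diag_mx; apply/matrixP => i j; by rewrite !mxE ord1 H.
Qed.

Lemma sq_le n (A : 'M[C]_n) j : A \is hermsymmx -> psdf A -> psdf (1%:M - A) ->
  0 <= A j j - \sum_k A j k * (A j k)^*.
Proof.
move=> Ah Ap Ap1.
have eA := spec_eq Ah.
set W := spectralmx A in eA; set q := spectral_diag A in eA.
have Wu : W \is unitarymx by apply: spectral_unitarymx.
have q0 k : 0 <= q 0 k by apply: (Fm_nonneg (P:=W)) => //; rewrite -eA.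
have q1 k : 0 <= 1 - q 0 k.
  have := (Fm_nonneg (P:=W) (d:=const_mx 1 - q) k Wu).
  by rewrite -Fm_sub -eA Fm_one // !mxE; apply.
have : psdf (A - A *m A).
  rewrite {1 2 3}eA Fm_mul // Fm_sub; apply: psdf_Fm => k.
  by rewrite !mxE -{1}(mulr1 (q 0 k)) -mulrBr mulr_ge0.
move=> /(_ (delta_mx 0 j)); rewrite qf_delta !mxE.
suff -> : \sum_k A j k * A k j = \sum_k A j k * (A j k)^* by [].
apply: eq_bigr => k _; move/hermP: Ah => Ah.
by rewrite [in X in _ * X]Ah !mxE.
Qed.

Lemma conj_back n (V A : 'M[C]_n) : V \is unitarymx ->
  V *m (V^t* *m A *m V^t*^t*) *m V^t* = A.
Proof.
by move=> Vu; rewrite trmxCK !mulmxA unitary_r // mul1mx -mulmxA unitary_r // mulmx1.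
Qed.

End Gen.

Section Real.
Variable R : realType.
Local Notation C := R[i].
Local Notation toC x := (real_complex R x).

Definition n2 (z : C) : R := complex.Re z ^+ 2 + complex.Im z ^+ 2.

Lemma ReM_conj (z : C) : complex.Re (z * z^*) = n2 z.
Proof. by case: z => a b; rewrite /n2 /=; lra. Qed.

Lemma n2_conj (z : C) : n2 z^* = n2 z.
Proof. by case: z => a b; rewrite /n2 /=; lra. Qed.

Lemma n2_real (x : R) : n2 (toC x) = x ^+ 2.
Proof. by rewrite /n2 /=; lra. Qed.

Lemma n2_scale (c : R) (z : C) : n2 (toC c * z) = c ^+ 2 * n2 z.
Proof. by case: z => a b; rewrite /n2 /=; lra. Qed.

Lemma n2_ge0 (z : C) : 0 <= n2 z.
Proof. by rewrite /n2 addr_ge0 // sqr_ge0. Qed.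

Lemma n2_opp (z : C) : n2 (- z) = n2 z.
Proof. by case: z => a b; rewrite /n2 /=; lra. Qed.

Lemma n2_sub (a b : C) : n2 (a - b) <= 2 * n2 a + 2 * n2 b.
Proof.
case: a => a1 a2; case: b => b1 b2; rewrite /n2 /=.
have := sqr_ge0 (a1 + b1); have := sqr_ge0 (a2 + b2); rewrite !expr2; nra.
Qed.

Lemma Re_sum (I : Type) (r : seq I) (P : pred I) (F : I -> C) :
  complex.Re (\sum_(i <- r | P i) F i) = \sum_(i <- r | P i) complex.Re (F i).
Proof. by apply: (big_morph (@complex.Re R)) => // -[a b] [c d]. Qed.

Lemma Im_sum (I : Type) (r : seq I) (P : pred I) (F : I -> C) :
  complex.Im (\sum_(i <- r | P i) F i) = \sum_(i <- r | P i) complex.Im (F i).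
Proof. by apply: (big_morph (@complex.Im R)) => // -[a b] [c d]. Qed.

Lemma ge0_Re (z : C) : 0 <= z -> 0 <= complex.Re z.
Proof. by rewrite lecE => /andP[]. Qed.

Lemma ge0_real (z : C) : 0 <= z -> z = toC (complex.Re z).
Proof. by case: z => a b; rewrite lecE /= => /andP[/eqP -> _]. Qed.

Lemma cauchy_schwarz t (a : 'I_t -> R) :
  (\sum_(i < t) a i) ^+ 2 <= t%:R * \sum_(i < t) a i ^+ 2.
Proof.
have H : 0 <= \sum_(i < t) \sum_(l < t) (a i - a l) ^+ 2.
  by apply: sumr_ge0 => i _; apply: sumr_ge0 => l _; apply: sqr_ge0.
have E : \sum_(i < t) \sum_(l < t) (a i - a l) ^+ 2 =
   \sum_(i < t) \sum_(l < t) (a i ^+ 2 + a l ^+ 2) - \sum_(i < t) \sum_(l < t) (2 * (a i * a l)).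
  rewrite -sumrB; apply: eq_bigr => i _; rewrite -sumrB; apply: eq_bigr => l _.
  by ring.
have E1 : \sum_(i < t) \sum_(l < t) (a i ^+ 2 + a l ^+ 2) = 2 * (t%:R * \sum_(i < t) a i ^+ 2).
  under eq_bigr => i _ do rewrite big_split /= sumr_const card_ord.
  rewrite big_split /= sumr_const card_ord.
  rewrite sumrMnl; set s := (\sum_(i < t) _); rewrite -mulr_natl; lra.
have E2 : \sum_(i < t) \sum_(l < t) (2 * (a i * a l)) = 2 * (\sum_(i < t) a i) ^+ 2.
  rewrite expr2 mulr_suml mulr_sumr; apply: eq_bigr => i _.
  by rewrite mulr_sumr mulr_sumr; apply: eq_bigr => l _.
move: H; rewrite E E1 E2; lra.
Qed.

Definition fro n (A : 'M[C]_n) : R := complex.Re (\tr (A^t* *m A)).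

Lemma froE n (A : 'M[C]_n) : fro A = \sum_j \sum_k n2 (A j k).
Proof.
rewrite /fro /mxtrace Re_sum.
under eq_bigr => k _ do rewrite mxE Re_sum.
rewrite exchange_big /=; apply: eq_bigr => j _; apply: eq_bigr => k _.
by rewrite !mxE mulrC ReM_conj.
Qed.

Lemma fro_ge0 n (A : 'M[C]_n) : 0 <= fro A.
Proof. by rewrite froE; apply: sumr_ge0 => j _; apply: sumr_ge0 => k _; apply: n2_ge0. Qed.

Lemma fro_opp n (A : 'M[C]_n) : fro (- A) = fro A.
Proof. by rewrite !froE; apply: eq_bigr => j _; apply: eq_bigr => k _; rewrite mxE n2_opp. Qed.

Lemma fro_sub n (A B : 'M[C]_n) : fro (A - B) <= 2 * fro A + 2 * fro B.
Proof.
rewrite !froE !mulr_sumr -big_split /=; apply: ler_sum => j _.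
rewrite !mulr_sumr -big_split /=; apply: ler_sum => k _.
by rewrite !mxE n2_sub.
Qed.

Lemma fro_unitary n (U A : 'M[C]_n) : U \is unitarymx -> fro (U *m A *m U^t*) = fro A.
Proof.
move=> Uu; rewrite /fro !trmxC_mul trmxCK.
have -> : U *m (A^t* *m U^t*) *m (U *m A *m U^t*) = U *m (A^t* *m A) *m U^t*.
  by rewrite !mulmxA mulmxKtV // -!mulmxA.
by rewrite mxtrace_mulC mulmxA unitary_l // mul1mx.
Qed.

Lemma fro_herm n (A : 'M[C]_n) : A \is hermsymmx -> fro A = complex.Re (\tr (A *m A)).
Proof. by move=> /hermP HA; rewrite /fro -HA. Qed.

Lemma n2_sum t (z : 'I_t -> C) : n2 (\sum_(i < t) z i) <= t%:R * \sum_(i < t) n2 (z i).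
Proof.
rewrite /n2 Re_sum Im_sum big_split /= mulrDr.
by apply: lerD; apply: cauchy_schwarz.
Qed.

Lemma fro_sum n t (A : 'I_t -> 'M[C]_n) : fro (\sum_(i < t) A i) <= t%:R * \sum_(i < t) fro (A i).
Proof.
rewrite froE; under [X in _ <= _ * X]eq_bigr => i _ do rewrite froE.
rewrite [X in _ <= _ * X]exchange_big mulr_sumr /=; apply: ler_sum => j _.
rewrite [X in _ <= _ * X]exchange_big mulr_sumr /=; apply: ler_sum => k _.
by rewrite summxE n2_sum.
Qed.

Lemma key_ineq (a b x y : R) : 0 <= x -> 0 <= y -> 1 <= a -> 1 <= b ->
  a ^+ 2 = 1 + x -> b ^+ 2 = 1 + y -> (a * b - 1) ^+ 2 <= (x ^+ 2 + y ^+ 2) / 2.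
Proof.
move=> x0 y0 a1 b1 ha hb.
have h1 : a * b - 1 <= (x + y) / 2.
  have := sqr_ge0 (a - b); rewrite !expr2 in ha hb *; nra.
have h0 : 0 <= a * b - 1 by nra.
have h2 : (a * b - 1) ^+ 2 <= ((x + y) / 2) ^+ 2.
  by rewrite !expr2; nra.
apply: (le_trans h2); have := sqr_ge0 (x - y); rewrite !expr2; nra.
Qed.

Lemma ReB (a b : C) : complex.Re (a - b) = complex.Re a - complex.Re b.
Proof. by case: a => ? ?; case: b. Qed.

Lemma conj_toC (x : R) : (toC x)^* = toC x.
Proof. by apply/eqP; rewrite eq_complex /= oppr0 !eqxx. Qed.

Lemma Re_toC (x : R) : complex.Re (toC x) = x.
Proof. by []. Qed.

Lemma psdmx_of n (A : 'M[C]_n) : A \is hermsymmx -> psdf A -> psdmx A.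
Proof. by move=> h p; split; [exact: h | exact: p]. Qed.

End Real.

Unset Implicit Arguments. Set Strict Implicit.

Theorem lemma9p2 (R : realType) (m n t : nat)
  (X : 'I_t -> 'M[R[i]]_(m ^ n))
  (hX : forall i, X i \is hermsymmx)
  (hsum : \sum_(i < t) X i = 1%:M)
  (RX : 'I_t -> 'M[R[i]]_(m ^ n))
  (hRX : is_argmin_subPOVM X RX) :
  let S := \sum_(i < t) complex.Re (\tr (zeta_mx (X i))) in
  normsq' (tup_sub RX X)
    <= 3 * (t + 1)%:R / (m ^ n)%:R * S
       + 6 * Num.sqrt (t%:R / (m ^ n)%:R * S).
Proof.
cbv zeta.
set S := (\sum_(i < t) complex.Re _).
set N := (m ^ n)%N in X hX RX hsum hRX S *.
pose toC (x : R) := real_complex R x.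
pose P i := spectralmx (X i).
pose d i := spectral_diag (X i).
have Pu i : P i \is unitarymx := spectral_unitarymx (X i).
have eX i : X i = Fm (P i) (d i) := spec_eq (hX i).
have dreal i k : d i 0 k = toC (complex.Re (d i 0 k)).
  have /mxOverP /(_ 0 k) := hermitian_spectral_diag_real (hX i).
  by move/RRe_real => h; rewrite /toC /d h.
pose negp (x : R) := if x <= 0 then - x else 0.
pose posp (x : R) := if x <= 0 then 0 else x.
have negp0 x : 0 <= negp x by rewrite /negp; case: ifP => h //; lra.
have posp0 x : 0 <= posp x by rewrite /posp; case: ifP => h //; lra.
pose dp i := \row_k toC (posp (complex.Re (d i 0 k))).
pose dm i := \row_k toC (negp (complex.Re (d i 0 k))).
pose Y i := Fm (P i) (dp i).
pose Xm i := Fm (P i) (dm i).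
have eXY i : X i = Y i - Xm i.
  rewrite /Y /Xm Fm_sub {1}eX; congr Fm; apply/matrixP => a k.
  rewrite ord1 !mxE {1}dreal -rmorphB; congr toC.
  by rewrite /posp /negp; case: ifP => _; lra.
have Yp i : psdf (Y i).
  by apply: psdf_Fm => k; rewrite mxE ler0c.
have Xmp i : psdf (Xm i).
  by apply: psdf_Fm => k; rewrite mxE ler0c.
have Yh i : Y i \is hermsymmx.
  by apply: herm_Fm => k; rewrite mxE conj_toC.
have Xmh i : Xm i \is hermsymmx.
  by apply: herm_Fm => k; rewrite mxE conj_toC.
have zetaE i : complex.Re (\tr (zeta_mx (X i))) = fro (Xm i).
  rewrite fro_herm; last exact: Xmh i.
  rewrite /Xm Fm_mul; last exact: Pu i.
  rewrite /zeta_mx invmx_unitary; last exact: Pu i.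
  have -> : \row_j real_complex R (zeta (complex.Re (spectral_diag (X i) 0 j))) = \row_j (dm i 0 j * dm i 0 j).
    apply/matrixP => a k; rewrite !mxE -rmorphM; apply: f_equal.
    by rewrite /zeta /negp; case: ifP => _; rewrite ?expr2 ?mulr0 // mulrNN.
  reflexivity.
have SE : S = \sum_(i < t) fro (Xm i).
  by apply: eq_bigr => i _; apply: zetaE.
have S0 : 0 <= S by rewrite SE; apply: sumr_ge0 => i _; apply: fro_ge0.
pose M := \sum_(i < t) Xm i.
have Mh : M \is hermsymmx := herm_sum (fun i _ => Xmh i).
have Mp : psdf M := psdf_sum (fun i _ => Xmp i).
pose V := spectralmx M.
pose mu := spectral_diag M.
have Vu : V \is unitarymx := spectral_unitarymx M.
have eM : M = Fm V mu := spec_eq Mh.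
have mu0 k : 0 <= mu 0 k.
  by apply: (Fm_nonneg (P:=V) k Vu); rewrite -eM; exact: Mp.
pose mr k := complex.Re (mu 0 k).
have mr0 k : 0 <= mr k by apply: ge0_Re.
have emu k : mu 0 k = toC (mr k) by apply: ge0_real.
pose r k := Num.sqrt (1 + mr k).
have r2 k : r k ^+ 2 = 1 + mr k by rewrite sqr_sqrtr // addr_ge0.
have r1 k : 1 <= r k.
  have := r2 k; have := sqrtr_ge0 (1 + mr k); have := mr0 k; rewrite -/(r k).
  rewrite expr2; nra.
have rn0 k : r k != 0 by apply/negP => /eqP h; have := r1 k; rewrite h; lra.
pose s k := (r k)^-1.
have rs k : r k * s k = 1 by rewrite /s divff.
pose Sd := diag_mx (\row_k toC (s k)).
have SdC : Sd^t* = Sd.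
  rewrite /Sd diag_trC; congr diag_mx; apply/matrixP => a k.
  by rewrite !mxE conj_toC.
pose Yt i := V *m Y i *m V^t*.
pose Xmt i := V *m Xm i *m V^t*.
pose Qt i := Sd *m Yt i *m Sd^t*.
pose Q i := V^t* *m Qt i *m V^t*^t*.
have Ytp i : psdf (Yt i) := psdf_congr V (Yp i).
have Yth i : Yt i \is hermsymmx := herm_congr V (Yh i).
have Qtp i : psdf (Qt i) := psdf_congr Sd (Ytp i).
have Qth i : Qt i \is hermsymmx := herm_congr Sd (Yth i).
have Qp i : psdf (Q i) := psdf_congr (V^t*) (Qtp i).
have Qh i : Q i \is hermsymmx := herm_congr (V^t*) (Qth i).
have sumY : \sum_(i < t) Y i = 1%:M + M.
  transitivity (\sum_(i < t) (X i + Xm i)).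
    by apply: eq_bigr => i _; rewrite eXY subrK.
  by rewrite big_split /= hsum.
have sumYt : \sum_(i < t) Yt i = diag_mx (\row_k toC (1 + mr k)).
  rewrite /Yt -mulmx_suml -mulmx_sumr sumY mulmxDr mulmxDl mulmx1 unitary_r //.
  rewrite eM Fm_conj // -diag_const_mx -raddfD /=; congr diag_mx.
  apply/matrixP => a k; rewrite ord1 !mxE emu.
  by rewrite /toC rmorphD rmorph1.
have sumQt : \sum_(i < t) Qt i = 1%:M.
  rewrite /Qt -mulmx_suml -mulmx_sumr sumYt SdC /Sd !mulmx_diag -diag_const_mx.
  congr diag_mx; apply/matrixP => a k; rewrite ord1 !mxE /toC -!rmorphM.
  rewrite -r2; have := rs k; move: (r k) (s k) => a' b' h.
  transitivity (real_complex R ((a' * b') * (a' * b'))); first by apply: f_equal; ring.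
  by rewrite h mulr1 rmorph1.
have sumQ : \sum_(i < t) Q i = 1%:M.
  by rewrite /Q -mulmx_suml -mulmx_sumr sumQt mulmx1 trmxCK unitary_l.
have HQ : subPOVM Q.
  split; first by move=> i; apply: psdmx_of; [exact: Qh i | exact: Qp i].
  by rewrite sumQ subrr; apply: psdmx_of; [apply: herm0 | apply: psdf0].
have E2 := hRX.2 Q HQ.
have eVQ i : V *m Q i *m V^t* = Qt i := conj_back (Qt i) Vu.
have eVX i : V *m X i *m V^t* = Yt i - Xmt i.
  by rewrite eXY mulmxBr mulmxBl.
have froXmt i : fro (Xmt i) = fro (Xm i) := fro_unitary (Xm i) Vu.
have eQt i j k : Qt i j k = toC (s j) * Yt i j k * toC (s k).
  by rewrite /Qt SdC /Sd mul_diag_mx mul_mx_diag !mxE.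
have E6 : \sum_j mr j ^+ 2 = fro M.
  rewrite -(fro_unitary M Vu) eM Fm_conj // froE; apply: eq_bigr => j _.
  rewrite (bigD1 j) //= big1 ?addr0.
    by rewrite mxE eqxx mulr1n emu n2_real.
  move=> k /negbTE kj; rewrite mxE eq_sym kj mulr0n.
  by rewrite /n2 /= expr2 mulr0 addr0.
have E7 : fro M <= t%:R * S by rewrite SE; apply: fro_sum.
clearbody Q Qt Yt Xmt.
have E1 : normsq' (tup_sub RX X) = normsq' (tup_sub X RX).
  rewrite /normsq' /tup_sub; apply: eq_bigr => i _; congr (_ / _).
  by rewrite -[RX i - X i]opprB; exact: (fro_opp (X i - RX i)).
have E3 : normsq' (tup_sub X Q) = (\sum_(i < t) fro (X i - Q i)) / N%:R.
  by rewrite /normsq' mulr_suml.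
have E4 i : fro (X i - Q i) <= 2 * fro (Yt i - Qt i) + 2 * fro (Xm i).
  rewrite -(fro_unitary (X i - Q i) Vu) mulmxBr mulmxBl eVX eVQ addrAC -froXmt.
  exact: fro_sub.
have row1 j : \sum_(i < t) \sum_k n2 (Qt i j k) <= 1.
  have h i : \sum_k n2 (Qt i j k) <= complex.Re (Qt i j j).
    have P1 : psdf (1%:M - Qt i).
      have -> : 1%:M - Qt i = \sum_(l | l != i) Qt l.
        by rewrite -sumQt (bigD1 i) //= addrC addrK.
      exact: (psdf_sum (fun l _ => Qtp l)).
    have := ge0_Re (sq_le j (Qth i) (Qtp i) P1).
    rewrite ReB Re_sum; under eq_bigr => k _ do rewrite ReM_conj.
    by rewrite subr_ge0.
  apply: (le_trans (ler_sum _ (fun i _ => h i))).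
  by rewrite -Re_sum -summxE sumQt mxE eqxx.
have E5i i : fro (Yt i - Qt i) <= \sum_j mr j ^+ 2 * \sum_k n2 (Qt i j k).
  have eD j k : (Yt i - Qt i) j k = toC (r j * r k - 1) * Qt i j k.
    rewrite !mxE eQt /toC.
    have eq1 : real_complex R (s j) * Yt i j k * real_complex R (s k) =
               real_complex R (s j * s k) * Yt i j k by rewrite rmorphM; ring.
    have eq2 : (r j * r k - 1) * (s j * s k) = 1 - s j * s k.
      by rewrite mulrBl mul1r mulrACA !rs mulr1.
    by rewrite eq1 mulrA -rmorphM eq2 rmorphB rmorph1 mulrBl mul1r.
  have sym : \sum_j \sum_k mr k ^+ 2 * n2 (Qt i j k) = \sum_j \sum_k mr j ^+ 2 * n2 (Qt i j k).
    rewrite exchange_big /=; apply: eq_bigr => j _; apply: eq_bigr => k _.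
    congr (_ * _); move/hermP: (Qth i) => {1}->.
    by rewrite !mxE n2_conj.
  rewrite froE.
  apply: (@le_trans _ _ (\sum_j \sum_k ((mr j ^+ 2 + mr k ^+ 2) / 2) * n2 (Qt i j k))).
    apply: ler_sum => j _; apply: ler_sum => k _.
    rewrite eD n2_scale; apply: ler_wpM2r; first exact: n2_ge0.
    by apply: key_ineq; rewrite ?r1 ?r2 ?mr0.
  have -> : \sum_j \sum_k ((mr j ^+ 2 + mr k ^+ 2) / 2) * n2 (Qt i j k) =
     (\sum_j \sum_k mr j ^+ 2 * n2 (Qt i j k)) / 2 + (\sum_j \sum_k mr k ^+ 2 * n2 (Qt i j k)) / 2.
    transitivity (\sum_j \sum_k (mr j ^+ 2 * n2 (Qt i j k) / 2 + mr k ^+ 2 * n2 (Qt i j k) / 2)).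
      by apply: eq_bigr => j _; apply: eq_bigr => k _; ring.
    under eq_bigr => j _ do rewrite big_split /= -!mulr_suml.
    by rewrite big_split /= -!mulr_suml.
  rewrite sym.
  have -> : \sum_j \sum_k mr j ^+ 2 * n2 (Qt i j k) = \sum_j mr j ^+ 2 * \sum_k n2 (Qt i j k).
    by apply: eq_bigr => j _; rewrite mulr_sumr.
  by rewrite -splitr.
have E5 : \sum_(i < t) fro (Yt i - Qt i) <= \sum_j mr j ^+ 2.
  apply: (le_trans (ler_sum _ (fun i _ => E5i i))).
  rewrite exchange_big /=; apply: ler_sum => j _.
  rewrite -mulr_sumr; rewrite -[X in _ <= X]mulr1; apply: ler_wpM2l.
    exact: sqr_ge0.
  exact: row1.
rewrite E1; apply: (le_trans E2); rewrite E3.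
have H : \sum_(i < t) fro (X i - Q i) <= 2 * (t%:R * S) + 2 * S.
  apply: (le_trans (ler_sum _ (fun i _ => E4 i))).
  rewrite big_split /= -!mulr_sumr -SE; lra.
set x := \sum_(i < t) fro (X i - Q i) in H *.
have iN0 : 0 <= N%:R^-1 :> R by rewrite invr_ge0.
have h1 : x / N%:R <= (2 * (t%:R * S) + 2 * S) / N%:R by rewrite ler_wpM2r.
have h2 : 0 <= t%:R * S / N%:R by rewrite mulr_ge0 // mulr_ge0.
have h3 : 0 <= S / N%:R by rewrite mulr_ge0.
have h4 := sqrtr_ge0 (t%:R / N%:R * S).
rewrite natrD; move: h1 h2 h3 h4; set q := Num.sqrt _; set u := N%:R^-1.
move=> h1 h2 h3 h4.
have -> : 3 * (t%:R + 1) * u * S = 3 * (t%:R * S * u) + 3 * (S * u) by ring.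
have : (2 * (t%:R * S) + 2 * S) * u = 2 * (t%:R * S * u) + 2 * (S * u) by ring.
lra.
Qed.
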